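(* Fix $-1<\xi_1<\xi_2<\xi_3<1$. As $(s,t)\to(0,0)$ with $s,t>0$, $$P(s,t)-P(0,0)=\frac{1}{2\sqrt{1-\xi_2}\sqrt{1+\xi_2}\sqrt{\xi_3-\xi_2}}\,t\ln\frac1t+o\!\left(t\ln\frac1t\right)+O(s).$$
   Context: Fix $-1<\xi_1<\xi_2<\xi_3<1$. For real $y$, $\sqrt y$ denotes the principal branch: $\sqrt y\ge0$ for $y\ge0$ and $\sqrt y=i\sqrt{|y|}$ for $y<0$. For small $s,t\ge 0$ let $$g_{s,t}(x)=\frac{\sqrt{x-\xi_1+s}\,\sqrt{x-\xi_2+t}}{\sqrt{x-1}\sqrt{x+1}\sqrt{x-\xi_1}\sqrt{x-\xi_2}\sqrt{x-\xi_3}},$$ and define $A(s,t)=-i\int_{-\infty}^{-1}g_{s,t}\,dx$, $B(s,t)=-i\int_{\xi_1-s}^{\xi_1}g_{s,t}\,dx$, $C(s,t)=-i\int_{\xi_2-t}^{\xi_2}g_{s,t}\,dx$, $P(s,t)=-\int_{\xi_2}^{\xi_3}g_{s,t}\,dx$, $Q(s,t)=-\int_{\xi_1}^{\xi_2-t}g_{s,t}\,dx$, and $1/J(s,t)=\int_1^{\infty}g_{s,t}\,dx$ (all these are real). Notation: $h=O(g)$ means $|h/g|$ is bounded near $(0,0)$, and $h=o(g)$ means $h/g\to0$ as $(s,t)\to(0,0)$. *)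

(* Defs.v *)
From Stdlib Require Import Reals.
From Coquelicot Require Import Coquelicot.
Open Scope R_scope.

Definition csqrt (y : R) : C :=
  if Rle_dec 0 y then RtoC (sqrt y) else (0, sqrt (- y)).

Definition g (xi1 xi2 xi3 s t x : R) : C :=
  Cdiv (Cmult (csqrt (x - xi1 + s)) (csqrt (x - xi2 + t)))
       (Cmult (Cmult (Cmult (Cmult (csqrt (x - 1)) (csqrt (x + 1)))
                            (csqrt (x - xi1))) (csqrt (x - xi2)))
              (csqrt (x - xi3))).

(* P(s,t) = - \int_{xi2}^{xi3} g_{s,t}(x) dx  (improper Riemann integral,
   the integrand having integrable singularities at the endpoints). *)
Definition P (xi1 xi2 xi3 s t : R) : C :=
  Copp (@RInt_gen C_R_CompleteNormedModule (g xi1 xi2 xi3 s t) (at_right xi2) (at_left xi3)).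

(* Main.v *)
Require Import Defs.
From Stdlib Require Import Reals Lra.
From Coquelicot Require Import Coquelicot.
Open Scope R_scope.

Definition qf (xi1 s x : R) := sqrt (x - xi1 + s) / (sqrt (1 - x) * sqrt (1 + x) * sqrt (x - xi1)).
Definition fr (xi1 xi2 xi3 s t x : R) :=
  qf xi1 s x * sqrt (x - xi2 + t) / (sqrt (x - xi2) * sqrt (xi3 - x)).

Lemma csqrt_pos y : 0 <= y -> csqrt y = RtoC (sqrt y).
Proof. intros H; unfold csqrt; destruct (Rle_dec 0 y); [reflexivity | lra]. Qed.
Lemma csqrt_neg y : y < 0 -> csqrt y = (0, sqrt (- y)).
Proof. intros H; unfold csqrt; destruct (Rle_dec 0 y); [lra | reflexivity]. Qed.

Lemma g_eq xi1 xi2 xi3 s t x : -1 < xi1 -> xi1 < xi2 -> xi2 < x -> x < xi3 -> xi3 < 1 ->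
  0 <= s -> 0 <= t -> g xi1 xi2 xi3 s t x = RtoC (- fr xi1 xi2 xi3 s t x).
Proof.
  intros H1 H2 H3 H4 H5 Hs Ht. unfold g, fr, qf.
  rewrite (csqrt_pos (x - xi1 + s)) by lra.
  rewrite (csqrt_pos (x - xi2 + t)) by lra.
  rewrite (csqrt_neg (x - 1)) by lra.
  rewrite (csqrt_pos (x + 1)) by lra.
  rewrite (csqrt_pos (x - xi1)) by lra.
  rewrite (csqrt_pos (x - xi2)) by lra.
  rewrite (csqrt_neg (x - xi3)) by lra.
  replace (- (x - 1)) with (1 - x) by ring.
  replace (- (x - xi3)) with (xi3 - x) by ring.
  assert (P1 : 0 < sqrt (1 - x)) by (apply sqrt_lt_R0; lra).
  assert (P2 : 0 < sqrt (x + 1)) by (apply sqrt_lt_R0; lra).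
  assert (P3 : 0 < sqrt (x - xi1)) by (apply sqrt_lt_R0; lra).
  assert (P4 : 0 < sqrt (x - xi2)) by (apply sqrt_lt_R0; lra).
  assert (P5 : 0 < sqrt (xi3 - x)) by (apply sqrt_lt_R0; lra).
  replace (1 + x) with (x + 1) by ring.
  set (D := sqrt (1 - x) * sqrt (x + 1) * sqrt (x - xi1) * sqrt (x - xi2) * sqrt (xi3 - x)).
  assert (HD : Cmult (Cmult (Cmult (Cmult (0, sqrt (1 - x)) (RtoC (sqrt (x + 1))))
       (RtoC (sqrt (x - xi1)))) (RtoC (sqrt (x - xi2)))) (0, sqrt (xi3 - x)) = RtoC (- D)).
  { unfold Cmult, RtoC, D; simpl. apply injective_projections; simpl; ring. }
  rewrite HD.
  assert (HN : Cmult (RtoC (sqrt (x - xi1 + s))) (RtoC (sqrt (x - xi2 + t))) =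
     RtoC (sqrt (x - xi1 + s) * sqrt (x - xi2 + t))).
  { unfold Cmult, RtoC; simpl. apply injective_projections; simpl; ring. }
  rewrite HN. change (Cdiv ?u ?v) with (Cdiv u v). rewrite <- (RtoC_div _ (- D)).
  2:{ unfold D. apply Ropp_neq_0_compat. repeat apply Rmult_integral_contrapositive_currified; lra. }
  f_equal. unfold D. field. repeat split; lra.
Qed.

Definition Xf xi2 xi3 th := xi2 + (xi3 - xi2) * sin th ^ 2.
Definition FF xi1 xi2 xi3 s t th := 2 * qf xi1 s (Xf xi2 xi3 th) * sqrt ((xi3 - xi2) * sin th ^ 2 + t).

Lemma qf_cont xi1 s x : xi1 < x -> -1 < x < 1 -> 0 <= s -> continuous (qf xi1 s) x.
Proof.
  intros. apply (ex_derive_continuous (qf xi1 s)). unfold qf. auto_derive.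
  repeat split; try lra.
  all: try (apply Rgt_not_eq; repeat apply Rmult_lt_0_compat; apply sqrt_lt_R0; lra).
Qed.

Lemma fr_cont xi1 xi2 xi3 s t x : -1 < xi1 -> xi1 < xi2 -> xi2 < x -> x < xi3 -> xi3 < 1 ->
  0 <= s -> 0 <= t -> continuous (fr xi1 xi2 xi3 s t) x.
Proof.
  intros. apply (ex_derive_continuous (fr xi1 xi2 xi3 s t)). unfold fr, qf. auto_derive.
  repeat split; try lra.
  all: try (apply Rgt_not_eq; repeat apply Rmult_lt_0_compat; apply sqrt_lt_R0; lra).
Qed.

Lemma sin2_bounds th : 0 <= sin th ^ 2 <= 1.
Proof. pose proof (SIN_bound th). split; [nra|nra]. Qed.

Lemma FF_cont xi1 xi2 xi3 s t th : -1 < xi1 -> xi1 < xi2 -> xi2 < xi3 -> xi3 < 1 ->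
  0 <= s -> 0 <= t -> continuous (FF xi1 xi2 xi3 s t) th.
Proof.
  intros. unfold FF.
  pose proof (sin2_bounds th).
  apply (continuous_mult (fun th => 2 * qf xi1 s (Xf xi2 xi3 th))).
  - apply (continuous_mult (fun _ => 2)). apply continuous_const.
    apply (continuous_comp (Xf xi2 xi3) (qf xi1 s)).
    + apply (ex_derive_continuous (Xf xi2 xi3)). unfold Xf. auto_derive. auto.
    + apply qf_cont; unfold Xf; nra.
  - apply continuous_sqrt_comp. apply (ex_derive_continuous (fun th => (xi3 - xi2) * sin th ^ 2 + t)). auto_derive. auto.
Qed.

Lemma sin_cos_pos th : 0 < th < PI / 2 -> 0 < sin th /\ 0 < cos th /\ sin th ^ 2 < 1.
Proof.
  intros [H1 H2]. pose proof PI_RGT_0.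
  assert (S : 0 < sin th) by (apply sin_gt_0; lra).
  assert (C : 0 < cos th) by (apply cos_gt_0; lra).
  pose proof (sin2_cos2 th). unfold Rsqr in *. repeat split; try lra. nra.
Qed.

Lemma FF_eq xi1 xi2 xi3 s t th : xi2 < xi3 -> 0 < th < PI / 2 ->
  (2 * (xi3 - xi2) * sin th * cos th) * fr xi1 xi2 xi3 s t (Xf xi2 xi3 th) = FF xi1 xi2 xi3 s t th.
Proof.
  intros Hc Hth. destruct (sin_cos_pos th Hth) as [S [C _]].
  unfold fr, FF, Xf.
  replace (xi2 + (xi3 - xi2) * sin th ^ 2 - xi2 + t) with ((xi3 - xi2) * sin th ^ 2 + t) by ring.
  replace (xi2 + (xi3 - xi2) * sin th ^ 2 - xi2) with ((xi3 - xi2) * sin th ^ 2) by ring.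
  replace (xi3 - (xi2 + (xi3 - xi2) * sin th ^ 2)) with ((xi3 - xi2) * cos th ^ 2).
  2:{ pose proof (sin2_cos2 th). unfold Rsqr in *. simpl. nra. }
  rewrite !sqrt_mult, !sqrt_pow2 by (try apply pow2_ge_0; lra).
  assert (Q : 0 < sqrt (xi3 - xi2)) by (apply sqrt_lt_R0; lra).
  pose proof (sqrt_sqrt (xi3 - xi2) ltac:(lra)).
  field_simplify_eq; [| repeat split; lra].
  rewrite pow2_sqrt by lra. ring.
Qed.

Lemma Xf_derive xi2 xi3 th : is_derive (Xf xi2 xi3) th (2 * (xi3 - xi2) * sin th * cos th).
Proof. unfold Xf. auto_derive. auto. simpl. ring. Qed.

Lemma Xf_in xi2 xi3 th : xi2 < xi3 -> 0 < th < PI / 2 -> xi2 < Xf xi2 xi3 th < xi3.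
Proof. intros Hc Hth. destruct (sin_cos_pos th Hth) as [S [C L]]. unfold Xf.
  assert (0 < sin th ^ 2) by (simpl; nra). split; nra. Qed.

Lemma RInt_fr_FF xi1 xi2 xi3 s t th1 th2 : -1 < xi1 -> xi1 < xi2 -> xi2 < xi3 -> xi3 < 1 ->
  0 <= s -> 0 <= t -> 0 < th1 < PI / 2 -> 0 < th2 < PI / 2 ->
  is_RInt (fr xi1 xi2 xi3 s t) (Xf xi2 xi3 th1) (Xf xi2 xi3 th2) (RInt (FF xi1 xi2 xi3 s t) th1 th2).
Proof.
  intros H1 H2 H3 H4 Hs Ht T1 T2.
  assert (Hin : forall th, Rmin th1 th2 <= th <= Rmax th1 th2 -> 0 < th < PI / 2).
  { intros th Hth. unfold Rmin, Rmax in Hth. destruct (Rle_dec th1 th2); lra. }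
  pose proof (is_RInt_comp (fr xi1 xi2 xi3 s t) (Xf xi2 xi3)
     (fun th => 2 * (xi3 - xi2) * sin th * cos th) th1 th2) as HC.
  assert (HC' : is_RInt (fr xi1 xi2 xi3 s t) (Xf xi2 xi3 th1) (Xf xi2 xi3 th2)
      (RInt (fr xi1 xi2 xi3 s t) (Xf xi2 xi3 th1) (Xf xi2 xi3 th2))).
  { apply (RInt_correct (V:=R_CompleteNormedModule)). apply (ex_RInt_continuous (V:=R_CompleteNormedModule)). intros z Hz.
    pose proof (Xf_in xi2 xi3 th1 H3 T1). pose proof (Xf_in xi2 xi3 th2 H3 T2).
    apply fr_cont; auto; unfold Rmin, Rmax in Hz; destruct (Rle_dec (Xf xi2 xi3 th1) (Xf xi2 xi3 th2)); lra. }
  replace (RInt (FF xi1 xi2 xi3 s t) th1 th2) with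
    (RInt (fr xi1 xi2 xi3 s t) (Xf xi2 xi3 th1) (Xf xi2 xi3 th2)); [exact HC'|].
  symmetry. apply is_RInt_unique.
  apply (is_RInt_ext (fun y => scal (2 * (xi3 - xi2) * sin y * cos y) (fr xi1 xi2 xi3 s t (Xf xi2 xi3 y)))).
  { intros x Hx. apply FF_eq; auto. apply Hin; lra. }
  apply HC.
  - intros x Hx. pose proof (Xf_in xi2 xi3 x H3 (Hin x Hx)). apply fr_cont; auto; lra.
  - intros x Hx. split. apply Xf_derive.
    apply (ex_derive_continuous (fun th => 2 * (xi3 - xi2) * sin th * cos th)). auto_derive. auto.
Qed.

Lemma is_RInt_RtoC (f : R -> R) a b l : is_RInt f a b l ->
  is_RInt (V := C_R_NormedModule) (fun x => RtoC (f x)) a b (RtoC l).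
Proof.
  intros H. apply (is_RInt_fct_extend_pair (U := R_NormedModule) (V := R_NormedModule)); simpl.
  exact H.
  pose proof (is_RInt_const (V := R_NormedModule) a b 0) as K.
  replace (scal (b - a) (0 : R_NormedModule)) with (0 : R) in K. exact K.
  unfold scal; simpl; unfold mult; simpl; ring.
Qed.

Lemma minus_RtoC (u v : R) : minus (RtoC u : C_R_NormedModule) (RtoC v) = RtoC (u - v).
Proof. unfold minus, plus, opp; simpl. unfold RtoC. apply injective_projections; simpl;
  unfold plus, opp; simpl; ring. Qed.

Lemma FF_bound xi1 xi2 xi3 s t : -1 < xi1 -> xi1 < xi2 -> xi2 < xi3 -> xi3 < 1 ->
  0 <= s -> 0 <= t -> exists M, 0 < M /\ forall th, 0 <= th <= PI / 2 -> Rabs (FF xi1 xi2 xi3 s t th) <= M.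
Proof.
  intros. pose proof PI_RGT_0.
  destruct (continuity_ab_maj (fun th => Rabs (FF xi1 xi2 xi3 s t th)) 0 (PI / 2)) as [Mx [HM _]].
  lra.
  intros c0 _. apply continuity_pt_filterlim. apply (continuous_Rabs_comp (FF xi1 xi2 xi3 s t)).
  apply FF_cont; auto.
  exists (Rabs (FF xi1 xi2 xi3 s t Mx) + 1). split. pose proof (Rabs_pos (FF xi1 xi2 xi3 s t Mx)); lra.
  intros th Hth. specialize (HM th Hth). simpl in HM. lra.
Qed.

Lemma ex_RInt_FF xi1 xi2 xi3 s t a b : -1 < xi1 -> xi1 < xi2 -> xi2 < xi3 -> xi3 < 1 ->
  0 <= s -> 0 <= t -> ex_RInt (FF xi1 xi2 xi3 s t) a b.
Proof. intros. apply (ex_RInt_continuous (V:=R_CompleteNormedModule)). intros. apply FF_cont; auto. Qed.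

Lemma asin_facts y : 0 < y < 1 -> 0 < asin y < PI / 2 /\ sin (asin y) = y /\ cos (asin y) = sqrt (1 - y ^ 2).
Proof.
  intros Hy. pose proof (asin_bound y). pose proof PI_RGT_0.
  assert (Hs : sin (asin y) = y) by (apply sin_asin; lra).
  assert (Hc : cos (asin y) = sqrt (1 - y ^ 2)) by (rewrite cos_asin by lra; unfold Rsqr; f_equal; ring).
  split; [|split; auto].
  split.
  - destruct (Rle_dec (asin y) 0) as [Hl|Hl]; [|lra].
    assert (sin (asin y) <= sin 0) by (apply sin_incr_1; lra). rewrite sin_0 in H1. lra.
  - destruct (Rle_dec (PI / 2) (asin y)) as [Hl|Hl]; [|lra].
    assert (asin y = PI / 2) by lra. rewrite H1, sin_PI2 in Hs. lra.
Qed.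

Lemma improper xi1 xi2 xi3 s t : -1 < xi1 -> xi1 < xi2 -> xi2 < xi3 -> xi3 < 1 ->
  0 <= s -> 0 <= t ->
  is_RInt_gen (V := C_R_NormedModule) (g xi1 xi2 xi3 s t) (at_right xi2) (at_left xi3)
    (RtoC (- RInt (FF xi1 xi2 xi3 s t) 0 (PI / 2))).
Proof.
  intros H1 H2 H3 H4 Hs Ht. pose proof PI_RGT_0 as HPI.
  set (c := xi3 - xi2). assert (Hc : 0 < c) by (unfold c; lra). assert (Hcd : c = xi3 - xi2) by reflexivity.
  destruct (FF_bound xi1 xi2 xi3 s t H1 H2 H3 H4 Hs Ht) as [M [HM HMb]].
  intros Pset [eps Heps].
  set (e := Rmin (eps / (4 * M)) (PI / 4)).
  assert (He : 0 < e).
  { unfold e. apply Rmin_pos. apply Rdiv_lt_0_compat. apply (cond_pos eps). lra. lra. }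
  assert (He2 : e <= PI / 4) by apply Rmin_r.
  assert (He3 : e * M <= eps / 4).
  { assert (e <= eps / (4 * M)) by apply Rmin_l.
    apply (Rmult_le_compat_r M) in H; [|lra].
    replace (eps / (4 * M) * M) with (eps / 4) in H by (field; lra). lra. }
  assert (Hse : 0 < sin e) by (apply sin_gt_0; lra).
  assert (Hse1 : sin e ^ 2 <= 1) by (apply sin2_bounds).
  set (d := c * sin e ^ 2 / 2).
  assert (Hd : 0 < d) by (unfold d; assert (0 < sin e ^ 2) by (simpl; nra); nra).
  assert (Hd2 : d <= c / 2) by (unfold d; nra).
  apply (Filter_prod _ _ _ (fun a' => xi2 < a' < xi2 + d) (fun b' => xi3 - d < b' < xi3)).
  - exists (mkposreal d Hd). intros y Hy Hy2. unfold ball in Hy; simpl in Hy.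
    unfold AbsRing_ball, abs, minus, plus, opp in Hy; simpl in Hy.
    apply Rabs_lt_between in Hy. lra.
  - exists (mkposreal d Hd). intros y Hy Hy2. unfold ball in Hy; simpl in Hy.
    unfold AbsRing_ball, abs, minus, plus, opp in Hy; simpl in Hy.
    apply Rabs_lt_between in Hy. lra.
  - intros a' b' [Ha1 Ha2] [Hb1 Hb2]. simpl.
    set (y1 := sqrt ((a' - xi2) / c)).
    assert (Hy1a : y1 ^ 2 = (a' - xi2) / c) by (apply pow2_sqrt; apply Rdiv_le_0_compat; lra).
    assert (Hy1b : 0 < y1) by (apply sqrt_lt_R0; apply Rdiv_lt_0_compat; lra).
    assert (Hy1c : y1 ^ 2 < sin e ^ 2 / 2).
    { rewrite Hy1a. apply (Rmult_lt_reg_r c); [lra|]. unfold Rdiv. rewrite Rmult_assoc, Rinv_l by lra.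
      unfold d in Ha2. lra. }
    assert (Hy1d : y1 < 1) by nra.
    destruct (asin_facts y1 (conj Hy1b Hy1d)) as [Th1 [Sn1 Cs1]].
    set (th1 := asin y1) in *.
    assert (Th1e : th1 < e).
    { destruct (Rle_dec e th1) as [Hl|Hl]; [|lra].
      assert (sin e <= sin th1) by (apply sin_incr_1; lra). rewrite Sn1 in H. nra. }
    set (y2 := sqrt ((b' - xi2) / c)).
    assert (Hy2a : y2 ^ 2 = (b' - xi2) / c) by (apply pow2_sqrt; apply Rdiv_le_0_compat; lra).
    assert (Hy2b : 0 < y2) by (apply sqrt_lt_R0; apply Rdiv_lt_0_compat; lra).
    assert (Hy2c : 1 - y2 ^ 2 < sin e ^ 2 / 2).
    { rewrite Hy2a. apply (Rmult_lt_reg_r c); [lra|].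
      replace ((1 - (b' - xi2) / c) * c) with (xi3 - b') by (unfold c; field; lra).
      unfold d in Hb1. lra. }
    assert (Hy2c' : 0 < 1 - y2 ^ 2).
    { rewrite Hy2a. apply (Rmult_lt_reg_r c); [lra|].
      replace ((1 - (b' - xi2) / c) * c) with (xi3 - b') by (unfold c; field; lra). lra. }
    assert (Hy2d : y2 < 1) by nra.
    destruct (asin_facts y2 (conj Hy2b Hy2d)) as [Th2 [Sn2 Cs2]].
    set (th2 := asin y2) in *.
    assert (Th2e : PI / 2 - th2 < e).
    { destruct (Rle_dec th2 (PI / 2 - e)) as [Hl|Hl]; [|lra].
      assert (cos (PI / 2 - e) <= cos th2) by (apply cos_decr_1; lra).
      rewrite cos_shift, Cs2 in H.
      assert (sin e ^ 2 <= sqrt (1 - y2 ^ 2) ^ 2) by (apply pow_incr; lra).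
      rewrite pow2_sqrt in H0 by lra. nra. }
    assert (XA : Xf xi2 xi3 th1 = a').
    { unfold Xf. rewrite Sn1, Hy1a. fold c. field. lra. }
    assert (XB : Xf xi2 xi3 th2 = b').
    { unfold Xf. rewrite Sn2, Hy2a. fold c. field. lra. }
    exists (RtoC (- RInt (FF xi1 xi2 xi3 s t) th1 th2)). split.
    + apply (is_RInt_ext (fun x => RtoC (- fr xi1 xi2 xi3 s t x))).
      { intros x Hx. symmetry. apply g_eq; auto; unfold Rmin, Rmax in Hx;
        destruct (Rle_dec a' b'); lra. }
      apply (is_RInt_RtoC (fun x => - fr xi1 xi2 xi3 s t x)).
      apply (is_RInt_opp (V := R_NormedModule)).
      rewrite <- XA, <- XB. apply RInt_fr_FF; auto.
    + apply Heps. apply norm_compat1. rewrite minus_RtoC, <- Cmod_norm, Cmod_R.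
      pose proof (RInt_Chasles (V:=R_CompleteNormedModule) (FF xi1 xi2 xi3 s t) 0 th1 th2
         (ex_RInt_FF _ _ _ _ _ _ _ H1 H2 H3 H4 Hs Ht) (ex_RInt_FF _ _ _ _ _ _ _ H1 H2 H3 H4 Hs Ht)) as C1.
      pose proof (RInt_Chasles (V:=R_CompleteNormedModule) (FF xi1 xi2 xi3 s t) 0 th2 (PI / 2)
         (ex_RInt_FF _ _ _ _ _ _ _ H1 H2 H3 H4 Hs Ht) (ex_RInt_FF _ _ _ _ _ _ _ H1 H2 H3 H4 Hs Ht)) as C2.
      simpl in C1, C2. unfold plus in C1, C2; simpl in C1, C2.
      pose proof (abs_RInt_le_const (FF xi1 xi2 xi3 s t) 0 th1 M ltac:(lra)
        (ex_RInt_FF _ _ _ _ _ _ _ H1 H2 H3 H4 Hs Ht) ltac:(intros; apply HMb; lra)) as B1.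
      pose proof (abs_RInt_le_const (FF xi1 xi2 xi3 s t) th2 (PI / 2) M ltac:(lra)
        (ex_RInt_FF _ _ _ _ _ _ _ H1 H2 H3 H4 Hs Ht) ltac:(intros; apply HMb; lra)) as B2.
      replace (- RInt (FF xi1 xi2 xi3 s t) th1 th2 - - RInt (FF xi1 xi2 xi3 s t) 0 (PI / 2))
        with (RInt (FF xi1 xi2 xi3 s t) 0 th1 + RInt (FF xi1 xi2 xi3 s t) th2 (PI / 2)) by lra.
      eapply Rle_lt_trans. apply Rabs_triang.
      assert ((th1 - 0) * M <= e * M) by (apply Rmult_le_compat_r; lra).
      assert ((PI / 2 - th2) * M <= e * M) by (apply Rmult_le_compat_r; lra).
      pose proof (cond_pos eps). lra.
Qed.

Lemma P_eq xi1 xi2 xi3 s t : -1 < xi1 -> xi1 < xi2 -> xi2 < xi3 -> xi3 < 1 ->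
  0 <= s -> 0 <= t -> P xi1 xi2 xi3 s t = RtoC (RInt (FF xi1 xi2 xi3 s t) 0 (PI / 2)).
Proof.
  intros. unfold P.
  rewrite (is_RInt_gen_unique (V := C_R_CompleteNormedModule) (g xi1 xi2 xi3 s t) _
    (improper xi1 xi2 xi3 s t H H0 H1 H2 H3 H4)).
  unfold Copp, RtoC; simpl. apply injective_projections; simpl; ring.
Qed.

Lemma bound_cont (f : R -> R) a b : a <= b -> (forall x, a <= x <= b -> continuous f x) ->
  exists M, 0 < M /\ forall x, a <= x <= b -> Rabs (f x) <= M.
Proof.
  intros Hab Hc.
  destruct (continuity_ab_maj (fun th => Rabs (f th)) a b Hab) as [Mx [HM _]].
  intros c0 Hc0. apply continuity_pt_filterlim. apply (continuous_Rabs_comp f). auto.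
  exists (Rabs (f Mx) + 1). split. pose proof (Rabs_pos (f Mx)); lra.
  intros th Hth. specialize (HM th Hth). simpl in HM. lra.
Qed.

Lemma qf_diff xi1 xi2 xi3 s x : -1 < xi1 -> xi1 < xi2 -> xi2 < xi3 -> xi3 < 1 ->
  0 <= s -> xi2 <= x <= xi3 ->
  Rabs (qf xi1 s x - qf xi1 0 x) <=
    s / (sqrt (xi2 - xi1) * (sqrt (1 - xi3) * sqrt (1 + xi2) * sqrt (xi2 - xi1))).
Proof.
  intros H1 H2 H3 H4 Hs Hx. unfold qf.
  replace (x - xi1 + 0) with (x - xi1) by ring.
  set (a := sqrt (x - xi1 + s)). set (b := sqrt (x - xi1)).
  set (D := sqrt (1 - x) * sqrt (1 + x) * sqrt (x - xi1)).
  set (E := sqrt (xi2 - xi1) * (sqrt (1 - xi3) * sqrt (1 + xi2) * sqrt (xi2 - xi1))).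
  assert (Pa : 0 < sqrt (1 - xi3)) by (apply sqrt_lt_R0; lra).
  assert (Pb : 0 < sqrt (1 + xi2)) by (apply sqrt_lt_R0; lra).
  assert (Pc : 0 < sqrt (xi2 - xi1)) by (apply sqrt_lt_R0; lra).
  assert (L1 : sqrt (1 - xi3) <= sqrt (1 - x)) by (apply sqrt_le_1_alt; lra).
  assert (L2 : sqrt (1 + xi2) <= sqrt (1 + x)) by (apply sqrt_le_1_alt; lra).
  assert (L3 : sqrt (xi2 - xi1) <= b) by (apply sqrt_le_1_alt; lra).
  assert (HE : 0 < E) by (unfold E; repeat apply Rmult_lt_0_compat; lra).
  assert (HEb : E <= b * D).
  { unfold E, D. fold b. apply Rmult_le_compat; try lra.
    repeat apply Rmult_le_pos; lra.
    apply Rmult_le_compat; try lra. apply Rmult_le_pos; lra.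
    apply Rmult_le_compat; lra. }
  assert (Hb : 0 < b) by lra.
  assert (HD : 0 < D) by (apply Rlt_le_trans with (r2 := E / b); [apply Rdiv_lt_0_compat; lra|];
     apply (Rmult_le_reg_l b); [lra|]; field_simplify; lra).
  assert (Ha2 : a * a = x - xi1 + s) by (apply sqrt_sqrt; lra).
  assert (Hb2 : b * b = x - xi1) by (apply sqrt_sqrt; lra).
  assert (Ha : b <= a) by (apply sqrt_le_1_alt; lra).
  change (sqrt (1 - x) * sqrt (1 + x) * b) with D.
  replace (a / D - b / D) with ((a - b) / D) by (field; lra).
  rewrite Rabs_pos_eq by (apply Rdiv_le_0_compat; lra).
  assert (K : (a - b) * b <= s) by nra.
  apply (Rmult_le_reg_r (b * D)). nra.
  replace ((a - b) / D * (b * D)) with ((a - b) * b) by (field; lra).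
  apply Rle_trans with s; auto.
  replace (s / E * (b * D)) with (s * ((b * D) / E)) by (field; lra).
  assert (1 <= b * D / E) by (apply (Rmult_le_reg_r E); [lra|]; field_simplify; lra).
  nra.
Qed.

Lemma B1 xi1 xi2 xi3 s t : -1 < xi1 -> xi1 < xi2 -> xi2 < xi3 -> xi3 < 1 ->
  0 <= s -> 0 <= t <= 1 ->
  Rabs (RInt (FF xi1 xi2 xi3 s t) 0 (PI / 2) - RInt (FF xi1 xi2 xi3 0 t) 0 (PI / 2)) <=
  (PI * sqrt (xi3 - xi2 + 1) / (sqrt (xi2 - xi1) * (sqrt (1 - xi3) * sqrt (1 + xi2) * sqrt (xi2 - xi1))))  * s.
Proof.
  intros H1 H2 H3 H4 Hs Ht. pose proof PI_RGT_0.
  set (E := sqrt (xi2 - xi1) * (sqrt (1 - xi3) * sqrt (1 + xi2) * sqrt (xi2 - xi1))).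
  assert (Pa : 0 < sqrt (1 - xi3)) by (apply sqrt_lt_R0; lra).
  assert (Pb : 0 < sqrt (1 + xi2)) by (apply sqrt_lt_R0; lra).
  assert (Pc : 0 < sqrt (xi2 - xi1)) by (apply sqrt_lt_R0; lra).
  assert (HE : 0 < E) by (unfold E; repeat apply Rmult_lt_0_compat; lra).
  pose proof (RInt_minus (V:=R_CompleteNormedModule) (FF xi1 xi2 xi3 s t) (FF xi1 xi2 xi3 0 t) 0 (PI / 2)
    (ex_RInt_FF _ _ _ _ _ _ _ H1 H2 H3 H4 Hs (proj1 Ht))
    (ex_RInt_FF _ _ _ _ _ _ _ H1 H2 H3 H4 (Rle_refl 0) (proj1 Ht))) as HM.
  simpl in HM. unfold minus, plus, opp in HM; simpl in HM.
  replace (RInt (FF xi1 xi2 xi3 s t) 0 (PI / 2) - RInt (FF xi1 xi2 xi3 0 t) 0 (PI / 2))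
    with (RInt (fun x => FF xi1 xi2 xi3 s t x + - FF xi1 xi2 xi3 0 t x) 0 (PI / 2)) by (rewrite HM; reflexivity).
  apply Rle_trans with ((PI / 2 - 0) * (2 * (s / E) * sqrt (xi3 - xi2 + 1))).
  2:{ right. field. lra. }
  apply abs_RInt_le_const. lra.
  apply (ex_RInt_continuous (V:=R_CompleteNormedModule)). intros.
  apply (continuous_plus (V:=R_NormedModule)). apply FF_cont; auto; lra.
  apply (continuous_opp (V:=R_NormedModule)). apply FF_cont; auto; lra.
  intros th Hth. unfold FF.
  pose proof (sin2_bounds th).
  assert (Hx : xi2 <= Xf xi2 xi3 th <= xi3) by (unfold Xf; nra).
  pose proof (qf_diff xi1 xi2 xi3 s (Xf xi2 xi3 th) H1 H2 H3 H4 Hs Hx) as Q. fold E in Q.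
  replace (2 * qf xi1 s (Xf xi2 xi3 th) * sqrt ((xi3 - xi2) * sin th ^ 2 + t) +
    - (2 * qf xi1 0 (Xf xi2 xi3 th) * sqrt ((xi3 - xi2) * sin th ^ 2 + t)))
    with (2 * (qf xi1 s (Xf xi2 xi3 th) - qf xi1 0 (Xf xi2 xi3 th)) * sqrt ((xi3 - xi2) * sin th ^ 2 + t)) by ring.
  rewrite !Rabs_mult, (Rabs_pos_eq 2) by lra. rewrite (Rabs_pos_eq (sqrt _)) by apply sqrt_pos.
  assert (sqrt ((xi3 - xi2) * sin th ^ 2 + t) <= sqrt (xi3 - xi2 + 1)) by (apply sqrt_le_1_alt; nra).
  pose proof (Rabs_pos (qf xi1 s (Xf xi2 xi3 th) - qf xi1 0 (Xf xi2 xi3 th))).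
  pose proof (sqrt_pos ((xi3 - xi2) * sin th ^ 2 + t)).
  apply Rmult_le_compat; nra.
Qed.

Definition Hf t y := (y * sqrt (y ^ 2 + t) + t * ln (y + sqrt (y ^ 2 + t)) - y ^ 2) / 2.

Lemma sqrt_gt_abs y t : 0 < t -> Rabs y < sqrt (y ^ 2 + t).
Proof. intros Ht. rewrite <- sqrt_Rsqr_abs. apply sqrt_lt_1_alt. unfold Rsqr. split; nra. Qed.

Lemma Hf_derive t y : 0 < t -> is_derive (Hf t) y (sqrt (y ^ 2 + t) - y).
Proof.
  intros Ht. pose proof (sqrt_gt_abs y t Ht) as A.
  pose proof (Rle_abs y). pose proof (Rle_abs (- y)). rewrite Rabs_Ropp in H0.
  assert (S2 : sqrt (y ^ 2 + t) * sqrt (y ^ 2 + t) = y ^ 2 + t) by (apply sqrt_sqrt; nra).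
  unfold Hf. auto_derive; replace (y * (y * 1)) with (y ^ 2) by ring.
  - pose proof (pow2_ge_0 y). repeat split; lra.
  - set (u := sqrt (y ^ 2 + t)) in *. assert (0 < u) by lra.
    replace t with (u * u - y ^ 2) by lra. field. lra.
Qed.

Definition hf c t th := Hf t (sqrt c * sin th).
Definition dh c t th := (sqrt (c * sin th ^ 2 + t) - sqrt c * sin th) * (sqrt c * cos th).
Definition Psi xi1 xi2 xi3 th := 2 * qf xi1 0 (Xf xi2 xi3 th) / (sqrt (xi3 - xi2) * cos th).
Definition Wf xi1 xi2 xi3 t th := FF xi1 xi2 xi3 0 t th - FF xi1 xi2 xi3 0 0 th.

Lemma hf_derive c t th : 0 < c -> 0 < t -> is_derive (hf c t) th (dh c t th).
Proof.
  intros Hc Ht. unfold hf.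
  assert (D1 : is_derive (fun th => sqrt c * sin th) th (sqrt c * cos th)).
  { auto_derive. auto. ring. }
  pose proof (is_derive_comp (Hf t) (fun th => sqrt c * sin th) th _ _ (Hf_derive t (sqrt c * sin th) Ht) D1) as D.
  replace (dh c t th) with (scal (sqrt c * cos th) (sqrt ((sqrt c * sin th) ^ 2 + t) - sqrt c * sin th)).
  exact D.
  unfold dh, scal; simpl; unfold mult; simpl.
  replace (sqrt c * sin th * (sqrt c * sin th * 1)) with (sqrt c * sqrt c * (sin th * (sin th * 1))) by ring. rewrite sqrt_sqrt by lra. ring.
Qed.

Lemma dh_cont c t th : 0 < c -> 0 < t -> continuous (dh c t) th.
Proof.
  intros Hc Ht. apply (ex_derive_continuous (dh c t)). unfold dh. auto_derive.
  pose proof (pow2_ge_0 (sin th)). simpl in H. repeat split; nra.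
Qed.

Lemma sqrt_sin2 c th : 0 <= c -> 0 <= sin th -> sqrt (c * sin th ^ 2) = sqrt c * sin th.
Proof. intros. rewrite sqrt_mult, sqrt_pow2 by (try apply pow2_ge_0; lra). auto. Qed.

Lemma dh_nonneg c t th : 0 < c -> 0 < t -> 0 <= sin th -> 0 <= cos th -> 0 <= dh c t th.
Proof.
  intros. unfold dh. apply Rmult_le_pos.
  rewrite <- sqrt_sin2 by lra. assert (sqrt (c * sin th ^ 2) <= sqrt (c * sin th ^ 2 + t)) by (apply sqrt_le_1_alt; lra). lra.
  apply Rmult_le_pos; [apply sqrt_pos|lra].
Qed.

Lemma W_eq xi1 xi2 xi3 t th : -1 < xi1 -> xi1 < xi2 -> xi2 < xi3 -> xi3 < 1 ->
  0 <= sin th -> 0 < cos th ->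
  Wf xi1 xi2 xi3 t th = Psi xi1 xi2 xi3 th * dh (xi3 - xi2) t th.
Proof.
  intros. unfold Wf, FF, Psi, dh. rewrite Rplus_0_r, sqrt_sin2 by lra.
  assert (0 < sqrt (xi3 - xi2)) by (apply sqrt_lt_R0; lra).
  field. lra.
Qed.

Lemma W_cont xi1 xi2 xi3 t th : -1 < xi1 -> xi1 < xi2 -> xi2 < xi3 -> xi3 < 1 -> 0 <= t ->
  continuous (Wf xi1 xi2 xi3 t) th.
Proof.
  intros. unfold Wf. apply (continuous_minus (V:=R_NormedModule)); apply FF_cont; auto; lra.
Qed.

Lemma RInt_dh c t a b : 0 < c -> 0 < t -> RInt (dh c t) a b = hf c t b - hf c t a.
Proof.
  intros. apply is_RInt_unique.
  pose proof (is_RInt_derive (V:=R_CompleteNormedModule) (hf c t) (dh c t) a b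
    (fun x _ => hf_derive c t x H H0) (fun x _ => dh_cont c t x H H0)) as K.
  exact K.
Qed.

Lemma L_near xi1 xi2 xi3 t th0 eps : -1 < xi1 -> xi1 < xi2 -> xi2 < xi3 -> xi3 < 1 ->
  0 < t -> 0 < th0 < PI / 2 -> 0 <= eps ->
  (forall th, 0 <= th <= th0 -> Rabs (Psi xi1 xi2 xi3 th - Psi xi1 xi2 xi3 0) <= eps) ->
  Rabs (RInt (Wf xi1 xi2 xi3 t) 0 th0 - Psi xi1 xi2 xi3 0 * (hf (xi3 - xi2) t th0 - hf (xi3 - xi2) t 0))
   <= eps * (hf (xi3 - xi2) t th0 - hf (xi3 - xi2) t 0).
Proof.
  intros H1 H2 H3 H4 Ht Hth Heps HP.
  set (c := xi3 - xi2). assert (Hc : 0 < c) by (unfold c; lra).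
  set (P0 := Psi xi1 xi2 xi3 0).
  set (D := hf c t th0 - hf c t 0).
  assert (exW : ex_RInt (Wf xi1 xi2 xi3 t) 0 th0).
  { apply (ex_RInt_continuous (V:=R_CompleteNormedModule)). intros. apply W_cont; auto; lra. }
  assert (exd : ex_RInt (dh c t) 0 th0).
  { apply (ex_RInt_continuous (V:=R_CompleteNormedModule)). intros. apply dh_cont; auto. }
  assert (ID : RInt (dh c t) 0 th0 = D) by (apply RInt_dh; auto).
  assert (IM : is_RInt (fun th => Wf xi1 xi2 xi3 t th - P0 * dh c t th) 0 th0
                 (RInt (Wf xi1 xi2 xi3 t) 0 th0 - P0 * D)).
  { pose proof (is_RInt_minus (V:=R_NormedModule) _ _ 0 th0 _ _ (RInt_correct _ _ _ exW)
       (is_RInt_scal (V:=R_NormedModule) _ 0 th0 P0 _ (RInt_correct _ _ _ exd))) as K.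
    rewrite ID in K. exact K. }
  rewrite <- (is_RInt_unique _ _ _ _ IM).
  assert (Hsc : forall th, 0 <= th <= th0 -> 0 <= sin th /\ 0 < cos th).
  { intros th Hh. pose proof PI_RGT_0. split.
    destruct (Req_dec th 0) as [->|Hn]. rewrite sin_0; lra. apply Rlt_le, sin_gt_0; lra.
    apply cos_gt_0; lra. }
  eapply Rle_trans. apply abs_RInt_le. lra. eexists; exact IM.
  rewrite <- ID. pose proof (RInt_scal (V:=R_CompleteNormedModule) (dh c t) 0 th0 eps exd) as RS. unfold scal in RS; simpl in RS; unfold mult in RS; simpl in RS. rewrite <- RS.
  apply RInt_le. lra.
  apply (ex_RInt_continuous (V:=R_CompleteNormedModule)). intros z Hz.
  apply (continuous_Rabs_comp (fun th => Wf xi1 xi2 xi3 t th - P0 * dh c t th)).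
  apply (continuous_minus (V:=R_NormedModule)). apply W_cont; auto; lra.
  apply (continuous_mult (fun _ => P0)). apply continuous_const. apply dh_cont; auto.
  exact (ex_RInt_scal (V:=R_NormedModule) (dh c t) 0 th0 eps exd).
  intros th Hh. destruct (Hsc th ltac:(lra)) as [S C].
  rewrite W_eq by auto. fold c.
  replace (Psi xi1 xi2 xi3 th * dh c t th - P0 * dh c t th) with ((Psi xi1 xi2 xi3 th - P0) * dh c t th) by ring.
  rewrite Rabs_mult, (Rabs_pos_eq (dh c t th)) by (apply dh_nonneg; lra).
  unfold scal; simpl; unfold mult; simpl.
  apply Rmult_le_compat_r. apply dh_nonneg; lra. apply HP; lra.
Qed.

Lemma L_far xi1 xi2 xi3 th0 : -1 < xi1 -> xi1 < xi2 -> xi2 < xi3 -> xi3 < 1 ->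
  0 < th0 < PI / 2 -> exists C2, 0 <= C2 /\ forall t, 0 < t ->
  Rabs (RInt (Wf xi1 xi2 xi3 t) th0 (PI / 2)) <= C2 * t.
Proof.
  intros H1 H2 H3 H4 Hth. pose proof PI_RGT_0.
  set (c := xi3 - xi2). assert (Hc : 0 < c) by (unfold c; lra).
  destruct (bound_cont (fun th => qf xi1 0 (Xf xi2 xi3 th)) th0 (PI / 2)) as [Q [HQ HQb]].
  lra.
  { intros x _. apply (continuous_comp (Xf xi2 xi3) (qf xi1 0)).
    apply (ex_derive_continuous (Xf xi2 xi3)). unfold Xf. auto_derive. auto.
    pose proof (sin2_bounds x). apply qf_cont; unfold Xf; nra. }
  assert (Hs0 : 0 < sin th0) by (apply sin_gt_0; lra).
  set (b0 := sqrt c * sin th0).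
  assert (Hb0 : 0 < b0) by (unfold b0; apply Rmult_lt_0_compat; [apply sqrt_lt_R0|]; lra).
  exists ((PI / 2 - th0) * (2 * Q / b0)). split.
  { apply Rmult_le_pos. lra. apply Rdiv_le_0_compat; lra. }
  intros t Ht.
  replace ((PI / 2 - th0) * (2 * Q / b0) * t) with ((PI / 2 - th0) * (2 * Q * t / b0)) by (field; lra).
  apply abs_RInt_le_const. lra.
  apply (ex_RInt_continuous (V:=R_CompleteNormedModule)). intros. apply W_cont; auto; lra.
  intros th Hh.
  assert (Ssin : sin th0 <= sin th) by (apply sin_incr_1; lra).
  assert (Sp : 0 < sin th) by lra.
  unfold Wf, FF. rewrite Rplus_0_r. fold c.
  rewrite sqrt_sin2 by lra.
  set (A := sqrt (c * sin th ^ 2 + t)). set (B := sqrt c * sin th).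
  assert (HB : b0 <= B) by (unfold b0, B; apply Rmult_le_compat_l; [apply sqrt_pos|lra]).
  assert (HA2 : A * A = c * sin th ^ 2 + t) by (apply sqrt_sqrt; pose proof (pow2_ge_0 (sin th)); nra).
  assert (HB2 : B * B = c * sin th ^ 2) by (unfold B; rewrite <- (sqrt_sqrt c) at 3 by lra; simpl; ring).
  assert (HAB : B <= A) by (unfold A, B; rewrite <- sqrt_sin2 by lra; apply sqrt_le_1_alt; lra).
  assert (Hw : (A - B) * b0 <= t) by nra.
  specialize (HQb th Hh). simpl in HQb.
  replace (2 * qf xi1 0 (Xf xi2 xi3 th) * A - 2 * qf xi1 0 (Xf xi2 xi3 th) * B)
    with (2 * qf xi1 0 (Xf xi2 xi3 th) * (A - B)) by ring.
  rewrite !Rabs_mult, (Rabs_pos_eq 2), (Rabs_pos_eq (A - B)) by lra.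
  assert (A - B <= t / b0) by (apply (Rmult_le_reg_r b0); [lra|]; field_simplify; lra).
  pose proof (Rabs_pos (qf xi1 0 (Xf xi2 xi3 th))).
  replace (2 * Q * t / b0) with (2 * Q * (t / b0)) by (field; lra).
  apply Rmult_le_compat; nra.
Qed.

Lemma hf0 c t : 0 < t -> hf c t 0 = - (t / 4 * ln (/ t)).
Proof.
  intros Ht. unfold hf, Hf. rewrite sin_0. rewrite Rmult_0_r.
  replace (0 ^ 2 + t) with t by ring. rewrite Rplus_0_l.
  rewrite ln_Rinv by lra.
  assert (ln t = 2 * ln (sqrt t)).
  { rewrite <- (sqrt_sqrt t) at 1 by lra. rewrite ln_mult by (apply sqrt_lt_R0; lra). ring. }
  rewrite H. field.
Qed.

Lemma L_h y0 : 0 < y0 -> exists CR, 0 <= CR /\ forall t, 0 < t <= 1 -> Rabs (Hf t y0) <= CR * t.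
Proof.
  intros Hy.
  set (Lg := Rabs (ln y0) + Rabs (ln (y0 + sqrt (y0 ^ 2 + 1)))).
  exists ((1 + Lg) / 2). split.
  { unfold Lg. pose proof (Rabs_pos (ln y0)). pose proof (Rabs_pos (ln (y0 + sqrt (y0 ^ 2 + 1)))). lra. }
  intros t [Ht Ht1]. unfold Hf.
  set (u := sqrt (y0 ^ 2 + t)).
  assert (Hu2 : u * u = y0 ^ 2 + t) by (apply sqrt_sqrt; pose proof (pow2_ge_0 y0); lra).
  assert (Hu0 : 0 <= u) by apply sqrt_pos.
  assert (Huy : y0 <= u) by nra.
  assert (Hu1 : u <= sqrt (y0 ^ 2 + 1)) by (apply sqrt_le_1_alt; lra).
  assert (K1 : 0 <= y0 * u - y0 ^ 2 <= t) by (split; nra).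
  assert (K2 : Rabs (ln (y0 + u)) <= Lg).
  { assert (ln y0 <= ln (y0 + u)) by (apply ln_le; lra).
    assert (ln (y0 + u) <= ln (y0 + sqrt (y0 ^ 2 + 1))) by (apply ln_le; lra).
    unfold Lg. apply Rabs_le. pose proof (Rle_abs (ln y0)). pose proof (Rle_abs (- ln y0)).
    rewrite Rabs_Ropp in H2.
    pose proof (Rle_abs (ln (y0 + sqrt (y0 ^ 2 + 1)))). pose proof (Rabs_pos (ln y0)).
    pose proof (Rabs_pos (ln (y0 + sqrt (y0 ^ 2 + 1)))). split; lra. }
  replace ((y0 * u + t * ln (y0 + u) - y0 ^ 2) / 2) with (((y0 * u - y0 ^ 2) + t * ln (y0 + u)) / 2) by lra.
  unfold Rdiv. rewrite Rabs_mult, (Rabs_pos_eq (/ 2)) by lra.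
  eapply Rle_trans. apply Rmult_le_compat_r. lra. apply Rabs_triang.
  rewrite (Rabs_pos_eq (y0 * u - y0 ^ 2)) by lra. rewrite Rabs_mult, (Rabs_pos_eq t) by lra.
  assert (t * Rabs (ln (y0 + u)) <= t * Lg) by (apply Rmult_le_compat_l; lra).
  lra.
Qed.

Lemma Psi_cont xi1 xi2 xi3 : -1 < xi1 -> xi1 < xi2 -> xi2 < xi3 -> xi3 < 1 ->
  continuous (Psi xi1 xi2 xi3) 0.
Proof.
  intros. apply (ex_derive_continuous (Psi xi1 xi2 xi3)). unfold Psi, qf, Xf. auto_derive.
  rewrite sin_0, cos_0. replace (0 ^ 2) with 0 by ring.
  assert (0 < sqrt (xi3 - xi2)) by (apply sqrt_lt_R0; lra).
  repeat split; try lra.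
  all: try (apply Rgt_not_eq; repeat apply Rmult_lt_0_compat; try apply sqrt_lt_R0; lra).
  all: apply Rgt_not_eq; rewrite !Rmult_0_r, !Rplus_0_r, Rmult_1_r; repeat apply Rmult_lt_0_compat; try apply sqrt_lt_R0; lra.
Qed.

Lemma Psi0 xi1 xi2 xi3 : -1 < xi1 -> xi1 < xi2 -> xi2 < xi3 -> xi3 < 1 ->
  Psi xi1 xi2 xi3 0 / 4 = / (2 * sqrt (1 - xi2) * sqrt (1 + xi2) * sqrt (xi3 - xi2)).
Proof.
  intros. unfold Psi, qf, Xf. rewrite sin_0, cos_0.
  replace (xi2 + (xi3 - xi2) * 0 ^ 2) with xi2 by ring. replace (xi2 - xi1 + 0) with (xi2 - xi1) by ring.
  assert (0 < sqrt (xi3 - xi2)) by (apply sqrt_lt_R0; lra).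
  assert (0 < sqrt (xi2 - xi1)) by (apply sqrt_lt_R0; lra).
  assert (0 < sqrt (1 - xi2)) by (apply sqrt_lt_R0; lra).
  assert (0 < sqrt (1 + xi2)) by (apply sqrt_lt_R0; lra).
  field. lra.
Qed.

Lemma B2 xi1 xi2 xi3 : -1 < xi1 -> xi1 < xi2 -> xi2 < xi3 -> xi3 < 1 ->
  forall eps, 0 < eps -> exists eta, 0 < eta <= 1 /\ forall t, 0 < t < eta ->
  Rabs ((RInt (FF xi1 xi2 xi3 0 t) 0 (PI / 2) - RInt (FF xi1 xi2 xi3 0 0) 0 (PI / 2))
        - / (2 * sqrt (1 - xi2) * sqrt (1 + xi2) * sqrt (xi3 - xi2)) * (t * ln (/ t)))
  <= eps * (t * ln (/ t)).
Proof.
  intros H1 H2 H3 H4 eps He. pose proof PI_RGT_0 as HPI.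
  set (c := xi3 - xi2). assert (Hc : 0 < c) by (unfold c; lra).
  set (P0 := Psi xi1 xi2 xi3 0).
  destruct (Psi_cont xi1 xi2 xi3 H1 H2 H3 H4 _ (locally_ball (Psi xi1 xi2 xi3 0) (mkposreal eps He)))
    as [dl Hdl].
  set (th0 := Rmin (dl / 2) (PI / 4)).
  assert (Hth0 : 0 < th0 < PI / 2).
  { unfold th0. split. apply Rmin_pos. pose proof (cond_pos dl). lra. lra.
    pose proof (Rmin_r (dl / 2) (PI / 4)). lra. }
  assert (Hth0d : th0 < dl) by (unfold th0; pose proof (Rmin_l (dl / 2) (PI / 4)); pose proof (cond_pos dl); lra).
  assert (HP : forall th, 0 <= th <= th0 -> Rabs (Psi xi1 xi2 xi3 th - Psi xi1 xi2 xi3 0) <= eps).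
  { intros th Hh. assert (B : ball 0 dl th).
    { unfold ball; simpl; unfold AbsRing_ball, abs, minus, plus, opp; simpl.
      rewrite Ropp_0, Rplus_0_r, Rabs_pos_eq by lra. lra. }
    specialize (Hdl th B). unfold ball in Hdl; simpl in Hdl;
    unfold AbsRing_ball, abs, minus, plus, opp in Hdl; simpl in Hdl. apply Rlt_le; exact Hdl. }
  set (y0 := sqrt c * sin th0).
  assert (Hy0 : 0 < y0) by (unfold y0; apply Rmult_lt_0_compat; [apply sqrt_lt_R0; lra | apply sin_gt_0; lra]).
  destruct (L_far xi1 xi2 xi3 th0 H1 H2 H3 H4 Hth0) as [C2 [HC2 HF]].
  destruct (L_h y0 Hy0) as [CR [HCR HH]].
  set (Lam := 4 * (eps * CR + Rabs P0 * CR + C2) / (3 * eps)).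
  assert (HLam : 0 <= Lam).
  { unfold Lam. apply Rdiv_le_0_compat; [|lra]. pose proof (Rabs_pos P0).
    assert (0 <= eps * CR) by nra. assert (0 <= Rabs P0 * CR) by nra. lra. }
  exists (Rmin 1 (exp (- Lam))). split.
  { split. apply Rmin_pos. lra. apply exp_pos. apply Rmin_l. }
  intros t [Ht Hteta].
  assert (Ht1 : t < 1) by (pose proof (Rmin_l 1 (exp (- Lam))); lra).
  assert (Hte : t < exp (- Lam)) by (pose proof (Rmin_r 1 (exp (- Lam))); lra).
  set (L := ln (/ t)).
  assert (HL : Lam < L).
  { unfold L. rewrite ln_Rinv by lra. apply ln_increasing in Hte; [|lra]. rewrite ln_exp in Hte. lra. }
  assert (exA : ex_RInt (FF xi1 xi2 xi3 0 t) 0 (PI / 2)) by (apply ex_RInt_FF; lra).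
  assert (exB : ex_RInt (FF xi1 xi2 xi3 0 0) 0 (PI / 2)) by (apply ex_RInt_FF; lra).
  assert (HJ : RInt (Wf xi1 xi2 xi3 t) 0 (PI / 2) =
     RInt (FF xi1 xi2 xi3 0 t) 0 (PI / 2) - RInt (FF xi1 xi2 xi3 0 0) 0 (PI / 2)).
  { apply is_RInt_unique.
    exact (is_RInt_minus (V:=R_NormedModule) _ _ 0 (PI / 2) _ _ (RInt_correct _ _ _ exA) (RInt_correct _ _ _ exB)). }
  rewrite <- HJ.
  assert (exW : forall a b, ex_RInt (Wf xi1 xi2 xi3 t) a b).
  { intros. apply (ex_RInt_continuous (V:=R_CompleteNormedModule)). intros. apply W_cont; auto; lra. }
  pose proof (RInt_Chasles (V:=R_CompleteNormedModule) (Wf xi1 xi2 xi3 t) 0 th0 (PI / 2) (exW _ _) (exW _ _)) as HCh.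
  simpl in HCh. unfold plus in HCh; simpl in HCh. rewrite <- HCh.
  pose proof (L_near xi1 xi2 xi3 t th0 eps H1 H2 H3 H4 Ht Hth0 (Rlt_le _ _ He) HP) as HN.
  fold c in HN. fold P0 in HN.
  assert (HD : hf c t th0 - hf c t 0 = Hf t y0 + t / 4 * L).
  { rewrite hf0 by lra. unfold hf. fold y0. fold L. ring. }
  rewrite HD in HN.
  specialize (HF t Ht). specialize (HH t (conj Ht (Rlt_le _ _ Ht1))).
  replace (/ (2 * sqrt (1 - xi2) * sqrt (1 + xi2) * sqrt c)) with (P0 / 4) by (unfold P0, c; apply Psi0; auto). fold L.
  set (N := RInt (Wf xi1 xi2 xi3 t) 0 th0) in *.
  set (F := RInt (Wf xi1 xi2 xi3 t) th0 (PI / 2)) in *.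
  set (h := Hf t y0) in *.
  replace (N + F - P0 / 4 * (t * L)) with ((N - P0 * (h + t / 4 * L)) + P0 * h + F) by field.
  eapply Rle_trans. apply Rabs_triang.
  eapply Rle_trans. apply Rplus_le_compat_r. apply Rabs_triang.
  rewrite Rabs_mult.
  assert (A1 : Rabs P0 * Rabs h <= Rabs P0 * (CR * t)) by (apply Rmult_le_compat_l; [apply Rabs_pos|lra]).
  assert (A2 : eps * (h + t / 4 * L) <= eps * (CR * t + t / 4 * L)).
  { apply Rmult_le_compat_l. lra. pose proof (Rle_abs h). lra. }
  assert (A3 : t * Lam <= t * L) by (apply Rmult_le_compat_l; lra).
  assert (A4 : 3 * eps * Lam = 4 * (eps * CR + Rabs P0 * CR + C2)) by (unfold Lam; field; lra).
  assert (A5 : eps * (t * Lam) * 3 = 4 * (eps * CR * t + Rabs P0 * CR * t + C2 * t)).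
  { replace (eps * (t * Lam) * 3) with (t * (3 * eps * Lam)) by ring. rewrite A4. ring. }
  assert (A6 : eps * (t * Lam) <= eps * (t * L)) by (apply Rmult_le_compat_l; lra).
  nra.
Qed.

Theorem proposition4p4 (xi1 xi2 xi3 : R) :
  -1 < xi1 -> xi1 < xi2 -> xi2 < xi3 -> xi3 < 1 ->
  exists (a : R -> R -> C) (Cst delta : R),
    0 < delta /\
    (forall s t, 0 < s < delta -> 0 < t < delta ->
       Cmod (Cminus (Cminus (Cminus (P xi1 xi2 xi3 s t) (P xi1 xi2 xi3 0 0))
                 (RtoC (/ (2 * sqrt (1 - xi2) * sqrt (1 + xi2) * sqrt (xi3 - xi2))
                        * (t * ln (/ t)))))
              (a s t)) <= Cst * s) /\
    (forall eps, 0 < eps -> exists eta, 0 < eta /\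
       forall s t, 0 < s < eta -> 0 < t < eta ->
         Cmod (a s t) <= eps * (t * ln (/ t))).
Proof.
  intros H1 H2 H3 H4.
  set (K := / (2 * sqrt (1 - xi2) * sqrt (1 + xi2) * sqrt (xi3 - xi2))).
  exists (fun s t => RtoC ((RInt (FF xi1 xi2 xi3 0 t) 0 (PI / 2) - RInt (FF xi1 xi2 xi3 0 0) 0 (PI / 2))
        - K * (t * ln (/ t)))).
  exists (PI * sqrt (xi3 - xi2 + 1) / (sqrt (xi2 - xi1) * (sqrt (1 - xi3) * sqrt (1 + xi2) * sqrt (xi2 - xi1)))).
  exists 1. split; [lra|split].
  - intros s t Hs Ht.
    rewrite (P_eq xi1 xi2 xi3 s t) by lra. rewrite (P_eq xi1 xi2 xi3 0 0) by lra.
    rewrite <- !RtoC_minus, Cmod_R.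
    replace (RInt (FF xi1 xi2 xi3 s t) 0 (PI / 2) - RInt (FF xi1 xi2 xi3 0 0) 0 (PI / 2) -
      K * (t * ln (/ t)) - (RInt (FF xi1 xi2 xi3 0 t) 0 (PI / 2) -
      RInt (FF xi1 xi2 xi3 0 0) 0 (PI / 2) - K * (t * ln (/ t))))
      with (RInt (FF xi1 xi2 xi3 s t) 0 (PI / 2) - RInt (FF xi1 xi2 xi3 0 t) 0 (PI / 2)) by ring.
    apply B1; auto; lra.
  - intros eps He. destruct (B2 xi1 xi2 xi3 H1 H2 H3 H4 eps He) as [eta [Heta HB]].
    exists eta. split. lra. intros s t Hs Ht. rewrite Cmod_R. apply HB. lra.
Qed.
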